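(* Let $(X,d)$ be a locally compact, geodesically complete CAT(0)-space connected at infinity, and let $d'$ be a metric on $X$ such that $(X,d')$ is a locally compact geodesically complete CAT(0)-space and $d(x,y)\le1\iff d'(x,y)\le1$ for all $x,y\in X$. Let $a,b$ be complete geodesics of $(X,d)$ connected by an asymptotic chain $a=a_0,a_1,\dots,a_n=b$ such that for every $i$ the image of $a_i$ is also the image of a complete geodesic of $(X,d')$. If $d(a(t_1),a(t_2))=d'(a(t_1),a(t_2))$ for all $t_1,t_2\in\mathbb R$, then $d(b(t_1),b(t_2))=d'(b(t_1),b(t_2))$ for all $t_1,t_2\in\mathbb R$.
   Context: Two geodesic rays in a CAT(0)-space are asymptotic if their Hausdorff distance is finite; two complete geodesics are asymptotic (in some direction) if they contain asymptotic rays. Geodesics $a,b$ are connected by an asymptotic chain if there is a finite sequence of complete geodesics $a=a_0,\dots,a_n=b$ such that $a_{i-1}$ and $a_i$ are asymptotic in some direction for each $1\le i\le n$. Geodesically complete: geodesic, and every geodesic segment lies in a complete geodesic. Connected at infinity: the complement of every metric ball is path connected. *)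

(* Defs.v *)
From Stdlib Require Import Reals Lra List.
Open Scope R_scope.

Section MetricNotions.
Context {X : Type} (d : X -> X -> R).

Definition is_metric : Prop :=
  (forall x y, 0 <= d x y) /\
  (forall x y, d x y = 0 <-> x = y) /\
  (forall x y, d x y = d y x) /\
  (forall x y z, d x z <= d x y + d y z).

Definition ball (x : X) (r : R) : X -> Prop := fun y => d x y < r.

Definition is_open (U : X -> Prop) : Prop :=
  forall x, U x -> exists e, 0 < e /\ forall y, ball x e y -> U y.

Definition is_compact (K : X -> Prop) : Prop :=
  forall (I : Type) (U : I -> X -> Prop),
    (forall i, is_open (U i)) ->
    (forall x, K x -> exists i, U i x) ->
    exists l : list I, forall x, K x -> exists i, In i l /\ U i x.

Definition locally_compact : Prop :=
  forall x, exists K, is_compact K /\ exists e, 0 < e /\ forall y, ball x e y -> K y.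

Definition geod_seg (c : R -> X) (L : R) : Prop :=
  0 <= L /\ forall s t, 0 <= s <= L -> 0 <= t <= L -> d (c s) (c t) = Rabs (s - t).

Definition geod_from_to (c : R -> X) (x y : X) : Prop :=
  geod_seg c (d x y) /\ c 0 = x /\ c (d x y) = y.

Definition geodesic_space : Prop :=
  forall x y, exists c, geod_from_to c x y.

Definition complete_geodesic (g : R -> X) : Prop :=
  forall s t, d (g s) (g t) = Rabs (s - t).

Definition geod_ray (r : R -> X) : Prop :=
  forall s t, 0 <= s -> 0 <= t -> d (r s) (r t) = Rabs (s - t).

Definition geodesically_complete : Prop :=
  geodesic_space /\
  forall c L, geod_seg c L ->
    exists g, complete_geodesic g /\
      forall s, 0 <= s <= L -> exists t, c s = g t.

Definition eucl (P Q : R * R) : R :=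
  sqrt ((fst P - fst Q)^2 + (snd P - snd Q)^2).

Definition interp (A B : R * R) (t : R) : R * R :=
  (fst A + t * (fst B - fst A), snd A + t * (snd B - snd A)).

(* CAT(0) comparison inequality between a point on one side and a point on
   another side of a geodesic triangle, with respect to comparison sides [A,B]
   and [A',B'] in the Euclidean plane. *)
Definition comp_ineq (side1 side2 : (R -> X) * R * (R * R) * (R * R)) : Prop :=
  let '(c, L, A, B) := side1 in
  let '(c', L', A', B') := side2 in
  forall s s', 0 <= s <= L -> 0 <= s' <= L' ->
    d (c s) (c' s') <= eucl (interp A B (s / L)) (interp A' B' (s' / L')).

Definition CAT0 : Prop :=
  geodesic_space /\
  forall (x y z : X) (c1 c2 c3 : R -> X),
    geod_from_to c1 x y -> geod_from_to c2 y z -> geod_from_to c3 z x ->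
    forall P Q S : R * R,
      eucl P Q = d x y -> eucl Q S = d y z -> eucl S P = d z x ->
      let sides := (c1, d x y, P, Q) :: (c2, d y z, Q, S) :: (c3, d z x, S, P) :: nil in
      forall u v, In u sides -> In v sides -> comp_ineq u v.

Definition path_continuous (p : R -> X) : Prop :=
  forall t, 0 <= t <= 1 -> forall e, 0 < e -> exists delta, 0 < delta /\
    forall s, 0 <= s <= 1 -> Rabs (s - t) < delta -> d (p s) (p t) < e.

Definition path_connected (A : X -> Prop) : Prop :=
  forall x y, A x -> A y -> exists p : R -> X,
    path_continuous p /\ p 0 = x /\ p 1 = y /\ forall t, 0 <= t <= 1 -> A (p t).

Definition connected_at_infinity : Prop :=
  forall x r, path_connected (fun y => ~ (d x y <= r)).

Definition asymptotic_rays (r1 r2 : R -> X) : Prop :=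
  exists C, (forall s, 0 <= s -> exists t, 0 <= t /\ d (r1 s) (r2 t) <= C) /\
            (forall t, 0 <= t -> exists s, 0 <= s /\ d (r1 s) (r2 t) <= C).

Definition asymptotic_geodesics (a b : R -> X) : Prop :=
  exists r1 r2, geod_ray r1 /\ geod_ray r2 /\
    (forall s, 0 <= s -> exists t, r1 s = a t) /\
    (forall s, 0 <= s -> exists t, r2 s = b t) /\
    asymptotic_rays r1 r2.

Definition asymptotic_chain (f : nat -> R -> X) (n : nat) : Prop :=
  (forall i, (i <= n)%nat -> complete_geodesic (f i)) /\
  (forall i, (1 <= i <= n)%nat -> asymptotic_geodesics (f (i - 1)%nat) (f i)).

End MetricNotions.

Definition same_image {X : Type} (g h : R -> X) : Prop :=
  (forall s, exists t, g s = h t) /\ (forall t, exists s, h t = g s).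

(* Main.v *)
Require Import Defs.
From Stdlib Require Import Reals Lra List Lia ZArith ClassicalEpsilon Classical.
Open Scope R_scope.


Ltac rabs := unfold Rabs in *; repeat match goal with
  | H: context [Rcase_abs ?a] |- _ => destruct (Rcase_abs a)
  | |- context [Rcase_abs ?a] => destruct (Rcase_abs a) end.

Lemma eps_le a b : (forall eps, 0 < eps -> a <= b + eps) -> a <= b.
Proof. intros H. destruct (Rle_dec a b) as [h|h]; auto.
  specialize (H ((a-b)/2)). lra. Qed.

Lemma nat_above r : exists n:nat, r <= INR n.
Proof. destruct (archimed r) as [H1 _]. exists (Z.to_nat (up r)).
  destruct (Z_le_gt_dec 0 (up r)).
  - rewrite INR_IZR_INZ, Z2Nat.id; [lra|lia].
  - assert (IZR (up r) < 0) by (apply IZR_lt; lia). pose proof (pos_INR (Z.to_nat (up r))). lra. Qed.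

Lemma lip_cont (f : R -> R): (forall a b, Rabs (f a - f b) <= Rabs (a - b)) -> continuity f.
Proof. intros H x. unfold continuity_pt, continue_in, limit1_in, limit_in. intros eps Heps.
  exists eps. split; auto. intros y [_ Hy]. simpl in *. unfold R_dist in *.
  eapply Rle_lt_trans; [apply H|exact Hy]. Qed.

Lemma mink a1 a2 b1 b2 k l: 0<=k -> 0<=l ->
  sqrt((k*a1 + l*b1)^2 + (k*a2+l*b2)^2) <= k * sqrt(a1^2+a2^2) + l*sqrt(b1^2+b2^2).
Proof. intros Hk Hl.
  set (sa := sqrt (a1^2+a2^2)). set (sb := sqrt (b1^2+b2^2)).
  assert (Ha: 0 <= sa) by apply sqrt_pos. assert (Hb: 0 <= sb) by apply sqrt_pos.
  assert (Ha2: sa^2 = a1^2+a2^2) by (apply pow2_sqrt; nra).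
  assert (Hb2: sb^2 = b1^2+b2^2) by (apply pow2_sqrt; nra).
  assert (CS: a1*b1+a2*b2 <= sa*sb).
  { destruct (Rle_dec 0 (a1*b1+a2*b2)).
    - rewrite <- (sqrt_pow2 (a1*b1+a2*b2)) by auto. unfold sa, sb; rewrite <- sqrt_mult by nra.
      apply sqrt_le_1_alt. pose proof (pow2_ge_0 (a1*b2-a2*b1)).
      assert (E: (a1^2+a2^2)*(b1^2+b2^2) - (a1*b1+a2*b2)^2 = (a1*b2-a2*b1)^2) by ring. lra.
    - pose proof (Rmult_le_pos _ _ Ha Hb). lra. }
  assert (HY: 0 <= k*sa + l*sb) by nra.
  rewrite <- (sqrt_pow2 (k*sa+l*sb)) by auto. apply sqrt_le_1_alt.
  assert (0 <= k*l) by nra.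
  assert (k*l*(a1*b1+a2*b2) <= k*l*(sa*sb)) by (apply Rmult_le_compat_l; auto).
  replace ((k*sa+l*sb)^2) with (k^2*sa^2 + l^2*sb^2 + 2*(k*l*(sa*sb))) by ring.
  rewrite Ha2, Hb2. nra. Qed.

Lemma eucl_conv P Q S lam: 0<=lam<=1 ->
  eucl (interp P Q lam) (interp S P 0) <= (1-lam) * eucl P S + lam * eucl Q S.
Proof. intros Hl. destruct P as [p1 p2], Q as [q1 q2], S as [s1 s2].
  unfold eucl, interp; simpl.
  replace (p1 + lam * (q1 - p1) - (s1 + 0 * (p1 - s1))) with ((1-lam)*(p1-s1) + lam*(q1-s1)) by ring.
  replace (p2 + lam * (q2 - p2) - (s2 + 0 * (p2 - s2))) with ((1-lam)*(p2-s2) + lam*(q2-s2)) by ring.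
  apply mink; lra. Qed.

Lemma comp_tri (L A B : R) : 0 < L -> 0 <= A -> 0 <= B -> L <= A + B -> A <= L + B -> B <= L + A ->
  exists P Q S, eucl P Q = L /\ eucl Q S = B /\ eucl S P = A.
Proof. intros. set (u := (L*L + A*A - B*B)/(2*L)).
  assert (Hu: u * (2*L) = L*L + A*A - B*B) by (unfold u; field; lra).
  assert (Hu1: u <= A) by nra. assert (Hu2: -A <= u) by nra.
  assert (Hv: 0 <= A^2 - u^2) by nra.
  pose proof (pow2_sqrt _ Hv) as Hs.
  exists (0,0), (L,0), (u, sqrt (A^2 - u^2)). unfold eucl; cbn [fst snd]. split; [|split].
  - replace ((0 - L)^2 + (0 - 0)^2) with (L^2) by ring. apply sqrt_pow2; lra.
  - replace ((L - u)^2 + (0 - sqrt (A ^ 2 - u ^ 2))^2) with (B^2). apply sqrt_pow2; lra.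
    replace ((0 - sqrt (A ^ 2 - u ^ 2))^2) with (sqrt (A ^ 2 - u ^ 2)^2) by ring. rewrite Hs. nra.
  - replace ((u - 0)^2 + (sqrt (A ^ 2 - u ^ 2) - 0)^2) with (A^2). apply sqrt_pow2; lra.
    replace ((sqrt (A ^ 2 - u ^ 2) - 0)^2) with (sqrt (A ^ 2 - u ^ 2)^2) by ring. rewrite Hs. ring. Qed.


Section S.
Context {X : Type}.

Lemma rev_tri (e : X -> X -> R) x p q : is_metric e -> Rabs (e x p - e x q) <= e p q.
Proof. intros [P [Z [Sy T]]]. pose proof (T x p q). pose proof (T x q p). rewrite (Sy q p) in *.
  apply Rabs_le; lra. Qed.

Lemma ceil_lemma (e1 e2 : X -> X -> R) : is_metric e1 -> is_metric e2 -> geodesic_space e1 ->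
  (forall x y, e1 x y <= 1 -> e2 x y <= 1) -> forall N x y, e1 x y <= INR N -> e2 x y <= INR N.
Proof.
 intros [P1 [Z1 [S1 T1]]] [P2 [Z2 [S2 T2]]] G U.
 induction N as [|N IH]; intros x y H.
 - simpl in H. assert (e1 x y = 0) by (specialize (P1 x y); lra). apply Z1 in H0. subst y.
   assert (e2 x x = 0) by (apply Z2; reflexivity). simpl; lra.
 - rewrite S_INR in *. destruct (Rle_dec (e1 x y) 1) as [Hl|Hl].
   + specialize (U x y Hl). pose proof (pos_INR N). lra.
   + destruct (G x y) as [c [[HL Hc] [H0 H1]]].
     set (L := e1 x y) in *.
     assert (E1: e1 x (c 1) = 1).
     { rewrite <- H0 at 1. rewrite Hc by lra. rewrite Rabs_left by lra. lra. }
     assert (E2: e1 (c 1) y = L - 1).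
     { rewrite <- H1. rewrite Hc by lra. rewrite Rabs_left by lra. lra. }
     assert (e2 x (c 1) <= 1) by (apply U; lra).
     assert (e2 (c 1) y <= INR N) by (apply IH; lra).
     pose proof (T2 x (c 1) y). lra.
Qed.

Definition isB (e : X -> X -> R) (r : R -> X) (x : X) (m : R) : Prop :=
 (forall T, 0 <= T -> m <= e x (r T) - T) /\
 (forall eps, 0 < eps -> exists T, 0 <= T /\ e x (r T) - T < m + eps).

Lemma phi_mono (e : X -> X -> R) (r : R -> X) x T T': is_metric e -> geod_ray e r -> 0 <= T <= T' ->
  e x (r T') - T' <= e x (r T) - T.
Proof. intros [P [Z [Sy Tr]]] Hr HT. pose proof (Tr x (r T) (r T')).
  rewrite Hr in H by lra. rewrite Rabs_left1 in H by lra. lra. Qed.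

Lemma B_exists (e : X -> X -> R) (r : R -> X) x : is_metric e -> geod_ray e r -> exists m, isB e r x m.
Proof.
 intros He Hr. pose proof He as [P [Z [Sy Tr]]].
 set (E := fun y => exists T, 0 <= T /\ y = T - e x (r T)).
 assert (Hb: bound E).
 { exists (e x (r 0)). intros y [T [HT ->]]. pose proof (Tr (r 0) x (r T)).
   rewrite Hr in H by lra. rewrite Rabs_left1 in H by lra. rewrite (Sy (r 0) x) in H. lra. }
 assert (Hne: exists y, E y) by (exists (0 - e x (r 0)); exists 0; split; [lra|reflexivity]).
 destruct (completeness E Hb Hne) as [M [HM1 HM2]].
 exists (-M). split.
 - intros T HT. assert (T - e x (r T) <= M) by (apply HM1; exists T; auto). lra.
 - intros eps Heps. destruct (classic (exists T, 0 <= T /\ e x (r T) - T < - M + eps)) as [h|h]; auto.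
   exfalso. assert (is_upper_bound E (M - eps)).
   { intros y [T [HT ->]]. destruct (Rle_dec (T - e x (r T)) (M - eps)) as [h'|h']; auto.
     exfalso. apply h. exists T. split; auto. lra. }
   specialize (HM2 _ H). lra.
Qed.

Lemma B_lip (e : X -> X -> R) (r : R -> X) x y mx my : is_metric e -> isB e r x mx -> isB e r y my -> mx <= my + e x y.
Proof. intros [P [Z [Sy Tr]]] [Hx1 Hx2] [Hy1 Hy2]. apply eps_le. intros eps Heps.
  destruct (Hy2 eps Heps) as [T [HT HT2]]. specialize (Hx1 T HT). pose proof (Tr x y (r T)). lra. Qed.

Lemma B_le (e1 e2 : X -> X -> R) (r : R -> X) x m1 m2 : is_metric e1 -> is_metric e2 ->
  geod_ray e1 r -> geod_ray e2 r ->
  (forall N x y, e1 x y <= INR N -> e2 x y <= INR N) -> isB e1 r x m1 -> isB e2 r x m2 -> m2 <= m1.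
Proof.
 intros He1 He2 Hr1 Hr2 Hc [H11 H12] [H21 H22]. pose proof He1 as [P [Z [Sy Tr]]].
 apply eps_le. intros eps Heps. destruct (H12 eps Heps) as [T1 [HT1 HT1']].
 destruct (nat_above (e1 x (r T1))) as [N HN].
 assert (exists z, T1 <= z /\ e1 x (r z) = INR N) as [z [Hz1 Hz2]].
 { destruct (Req_dec (e1 x (r T1)) (INR N)) as [h|h]. exists T1; split; [lra|auto].
   set (f := fun T => e1 x (r (Rmax T1 T)) - INR N).
   assert (Hf: continuity f).
   { apply lip_cont. intros a b. unfold f.
     replace (e1 x (r (Rmax T1 a)) - INR N - (e1 x (r (Rmax T1 b)) - INR N)) with
       (e1 x (r (Rmax T1 a)) - e1 x (r (Rmax T1 b))) by ring.
     eapply Rle_trans. apply rev_tri; auto. rewrite Hr1.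
     unfold Rmax; destruct (Rle_dec T1 a), (Rle_dec T1 b); rabs; lra.
     unfold Rmax; destruct (Rle_dec T1 a); lra. unfold Rmax; destruct (Rle_dec T1 b); lra. }
   pose proof (pos_INR N).
   set (T2 := T1 + 2 * INR N + 1).
   assert (HT12: T1 < T2) by (unfold T2; lra).
   assert (Hf1: f T1 < 0). { unfold f. rewrite Rmax_left by lra. lra. }
   assert (Hf2: 0 < f T2). { unfold f. rewrite Rmax_right by lra.
     pose proof (Tr (r T1) x (r T2)). rewrite Hr1 in H0 by lra. rewrite Rabs_left1 in H0 by lra.
     rewrite (Sy (r T1) x) in H0. unfold T2 in *. lra. }
   destruct (IVT f T1 T2 Hf HT12 Hf1 Hf2) as [z [Hz Hz0]].
   exists z. split; [lra|]. unfold f in Hz0. rewrite Rmax_right in Hz0 by lra. lra. }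
 assert (e2 x (r z) <= INR N) by (apply Hc; lra).
 pose proof (H21 z ltac:(lra)). pose proof (phi_mono e1 r x T1 z He1 Hr1 ltac:(lra)). lra.
Qed.

End S.


Section S.
Context {X : Type}.

Lemma cat0_convex (e : X -> X -> R) (b : R -> X) (p : X) x y lam : is_metric e -> CAT0 e ->
  complete_geodesic e b -> 0 <= lam <= 1 ->
  e (b (x + lam * (y - x))) p <= (1 - lam) * e (b x) p + lam * e (b y) p.
Proof.
  intros He [G Hc] Hb Hl. pose proof He as [P [Z [Sy Tr]]].
  destruct (Req_dec x y) as [h|h].
  { subst y. replace (x + lam * (x - x)) with x by ring. lra. }
  set (L := Rabs (y - x)).
  assert (HL: 0 < L) by (unfold L; rabs; lra).
  assert (HLe: e (b x) (b y) = L) by (rewrite Hb; unfold L; rabs; lra).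
  assert (Hr: Rabs ((y - x) / L) = 1).
  { unfold L. destruct (Rle_dec 0 (y - x)).
    - rewrite (Rabs_right (y - x)) by lra. replace ((y-x)/(y-x)) with 1 by (field; lra). apply Rabs_R1.
    - rewrite (Rabs_left (y - x)) by lra. replace ((y-x)/ -(y-x)) with (-1) by (field; lra).
      rewrite Rabs_left by lra. lra. }
  set (c1 := fun u => b (x + u * ((y - x) / L))).
  assert (H1: geod_from_to e c1 (b x) (b y)).
  { unfold geod_from_to, geod_seg. rewrite HLe. split; [split|split].
    - lra.
    - intros s t _ _. unfold c1. rewrite Hb.
      replace (x + s * ((y - x) / L) - (x + t * ((y - x) / L))) with ((s - t) * ((y-x)/L)) by ring.
      rewrite Rabs_mult, Hr. ring.
    - unfold c1. f_equal. ring.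
    - unfold c1. f_equal. field. lra. }
  destruct (G (b y) p) as [c2 H2]. destruct (G p (b x)) as [c3 H3].
  pose proof (Tr (b x) p (b y)). pose proof (Tr (b y) (b x) p). pose proof (Tr p (b y) (b x)).
  pose proof (Sy p (b x)). pose proof (Sy (b y) p). pose proof (Sy (b x) (b y)).
  assert (Ht1: e (b x) (b y) <= e (b y) p + e p (b x)) by lra.
  assert (Ht2: e (b y) p <= e (b x) (b y) + e p (b x)) by lra.
  assert (Ht3: e p (b x) <= e (b x) (b y) + e (b y) p) by lra.
  destruct (comp_tri (e (b x) (b y)) (e p (b x)) (e (b y) p)) as [PP [QQ [SS [E1 [E2 E3]]]]];
    try lra; try apply P.
  specialize (Hc (b x) (b y) p c1 c2 c3 H1 H2 H3 PP QQ SS E1 E2 E3).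
  cbv zeta in Hc.
  specialize (Hc (c1, e (b x) (b y), PP, QQ) (c3, e p (b x), SS, PP)
    ltac:(left; reflexivity) ltac:(right; right; left; reflexivity)).
  unfold comp_ineq in Hc.
  specialize (Hc (lam * e (b x) (b y)) 0).
  rewrite HLe in Hc.
  assert (Hp: 0 <= e p (b x)) by apply P.
  specialize (Hc ltac:(nra) ltac:(lra)).
  destruct H3 as [_ [H30 _]]. rewrite H30 in Hc.
  unfold c1 in Hc.
  replace (x + lam * L * ((y - x) / L)) with (x + lam * (y - x)) in Hc by (field; lra).
  replace (lam * L / L) with lam in Hc by (field; lra).
  replace (0 / e p (b x)) with 0 in Hc by (unfold Rdiv; ring).
  eapply Rle_trans; [exact Hc|].
  eapply Rle_trans; [apply eucl_conv; auto|].
  assert (Hps: eucl PP SS = e (b x) p).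
  { rewrite <- (Sy p (b x)), <- E3. unfold eucl. f_equal. ring. }
  rewrite Hps, E2. lra.
Qed.
End S.


Lemma CB (F : R -> R) K :
  (forall u v lam, 0 <= lam <= 1 -> F (u + lam * (v - u)) <= (1 - lam) * F u + lam * F v) ->
  (forall u v, Rabs (F u - F v) <= Rabs (u - v)) ->
  (forall u, 0 <= u -> F u + u <= K) -> forall u, F u + u = F 0.
Proof.
  intros Hc Hl Hb.
  assert (Hinc: forall u v, u <= v -> F u + u <= F v + v).
  { intros u v Huv. specialize (Hl u v). rabs; lra. }
  assert (Hno: forall u v, u < v -> ~ (F u + u < F v + v)).
  { intros u v Huv Hlt. set (d := F v + v - (F u + u)).
    set (M := 2 + Rabs ((K - (F u + u)) / d) + Rabs (u / (v - u))).
    assert (Hd: 0 < d) by (unfold d; lra).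
    assert (HM1: 1 <= M) by (unfold M; pose proof (Rabs_pos ((K - (F u + u)) / d)); pose proof (Rabs_pos (u / (v - u))); lra).
    set (w := u + (v - u) * M).
    assert (Hw0: 0 <= w).
    { unfold w, M. pose proof (Rabs_pos ((K - (F u + u)) / d)).
      assert (- (u / (v-u)) <= Rabs (u / (v - u))) by (rabs; lra).
      assert ((v - u) * (- (u / (v - u))) = - u) by (field; lra).
      assert (0 <= (v-u) * (1 + Rabs ((K - (F u + u)) / d))) by nra.
      assert ((v - u) * (- (u / (v - u))) <= (v-u) * Rabs (u / (v - u))) by (apply Rmult_le_compat_l; lra).
      nra. }
    assert (HwK: F w + w <= K) by (apply Hb; auto).
    specialize (Hc u w (/ M) ltac:(split; [apply Rlt_le, Rinv_0_lt_compat; lra| rewrite <- Rinv_1; apply Rinv_le_contravar; lra])) .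
    replace (u + / M * (w - u)) with v in Hc by (unfold w; field; lra).
    assert (Hk: M * (F v + v) <= (M - 1) * (F u + u) + (F w + w)).
    { assert (M * F v <= M * ((1 - / M) * F u + / M * F w)) by (apply Rmult_le_compat_l; lra).
      replace (M * ((1 - / M) * F u + / M * F w)) with ((M - 1) * F u + F w) in H by (field; lra).
      assert (Hmv: M * v = (M - 1) * u + w) by (unfold w; ring).
      replace (M*(F v + v)) with (M * F v + M * v) by ring.
      replace ((M-1)*(F u + u)) with ((M-1)*F u + (M-1)*u) by ring. lra. }
    assert (Hq: (K - (F u + u)) <= (M - 1) * d).
    { assert ((K - (F u + u)) / d <= M - 1) by (unfold M; pose proof (Rabs_pos (u / (v - u))); rabs; lra).
      apply Rmult_le_compat_l with (r := d) in H; [|lra].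
      replace (d * ((K - (F u + u)) / d)) with (K - (F u + u)) in H by (field; lra). lra. }
    assert (M * (F v + v) - M * (F u + u) <= (M - 1) * d) by lra.
    replace (M * (F v + v) - M * (F u + u)) with (M * d) in H by (unfold d; ring). lra. }
  intros u. destruct (Rtotal_order u 0) as [h|[h|h]].
  - pose proof (Hinc u 0 ltac:(lra)). pose proof (Hno u 0 h). rewrite Rplus_0_r in *. lra.
  - subst; ring.
  - pose proof (Hinc 0 u ltac:(lra)). pose proof (Hno 0 u h). rewrite Rplus_0_r in *. lra.
Qed.

Lemma aff_lemma t s0 s1 s: 0<=s -> Rabs(t - s0) = s -> Rabs(s1 - s0) = 1 ->
  Rabs(t - s1) = Rabs (s - 1) -> t = s0 + (s1 - s0)*s.
Proof. intros. assert (s1 - s0 = 1 \/ s1 - s0 = -1) as [E|E] by (rabs; lra); rewrite E;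
  rabs; lra. Qed.

Lemma win_lemma x w p q m: x <= w <= x+1 -> 1 <= Rabs(p-q) <= 1 -> w - x <= Rabs(p-m) <= 1 ->
  x + 1 - w <= Rabs(m-q) <= 1 -> Rabs(p-m) = w - x.
Proof. intros. rabs; lra. Qed.


Section S.
Context {X : Type}.

Lemma B_conv (e : X -> X -> R) (r : R -> X) (b : R -> X) x y lam mx my mz :
  is_metric e -> CAT0 e -> complete_geodesic e b -> geod_ray e r -> 0 <= lam <= 1 ->
  isB e r (b x) mx -> isB e r (b y) my -> isB e r (b (x + lam * (y - x))) mz ->
  mz <= (1 - lam) * mx + lam * my.
Proof.
  intros He Hc Hb Hr Hl [_ Hx] [_ Hy] [Hz _]. apply eps_le. intros eps Heps.
  destruct (Hx eps Heps) as [Tx [HTx HTx']]. destruct (Hy eps Heps) as [Ty [HTy HTy']].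
  set (T := Rmax Tx Ty).
  assert (Tx <= T /\ Ty <= T) as [h1 h2] by (unfold T, Rmax; destruct (Rle_dec Tx Ty); lra).
  pose proof (phi_mono e r (b x) Tx T He Hr ltac:(lra)).
  pose proof (phi_mono e r (b y) Ty T He Hr ltac:(lra)).
  pose proof (cat0_convex e b (r T) x y lam He Hc Hb Hl).
  specialize (Hz T ltac:(lra)).
  assert ((1 - lam) * (e (b x) (r T) - T) <= (1 - lam) * (mx + eps)) by (apply Rmult_le_compat_l; lra).
  assert (lam * (e (b y) (r T) - T) <= lam * (my + eps)) by (apply Rmult_le_compat_l; lra).
  nra.
Qed.

Lemma B_bound (e : X -> X -> R) (r1 r2 : R -> X) C s m : is_metric e -> geod_ray e r1 -> geod_ray e r2 ->
  (forall t, 0 <= t -> exists s, 0 <= s /\ e (r1 s) (r2 t) <= C) -> 0 <= s ->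
  isB e r1 (r2 s) m -> m <= 2 * C + e (r1 0) (r2 0) - s.
Proof.
  intros [P [Z [Sy Tr]]] H1 H2 HC Hs [Hm _]. destruct (HC s Hs) as [T [HT HT']].
  specialize (Hm T HT). rewrite Sy in Hm.
  pose proof (Tr (r2 s) (r1 T) (r2 0)). pose proof (Tr (r1 T) (r1 0) (r2 0)).
  rewrite H2 in H by lra. rewrite H1 in H0 by lra. rewrite (Sy (r2 s) (r1 T)) in H.
  rabs; lra.
Qed.

Lemma step (d d' : X -> X -> R) (Hd: is_metric d) (Hd': is_metric d') (Hcat: CAT0 d)
  (Hgeo': geodesic_space d') (Hunit : forall x y, d x y <= 1 <-> d' x y <= 1)
  (a b : R -> X) (Ha: complete_geodesic d a) (Hb: complete_geodesic d b)
  (Hiso: forall s t, d (a s) (a t) = d' (a s) (a t))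
  (Has: asymptotic_geodesics d a b)
  (Hg: exists g, complete_geodesic d' g /\ same_image b g) :
  forall s t, d (b s) (b t) = d' (b s) (b t).
Proof.
  destruct Has as [r1 [r2 [Hr1 [Hr2 [Hr1a [Hr2b [C [_ HC2]]]]]]]].
  assert (Hr1': geod_ray d' r1).
  { intros s t Hs Ht. destruct (Hr1a s Hs) as [ts Hts]. destruct (Hr1a t Ht) as [tt Htt].
    rewrite Hts, Htt, <- Hiso, <- Hts, <- Htt. apply Hr1; auto. }
  pose proof (ceil_lemma d d' Hd Hd' (proj1 Hcat) (fun x y => proj1 (Hunit x y))) as C12.
  pose proof (ceil_lemma d' d Hd' Hd Hgeo' (fun x y => proj2 (Hunit x y))) as C21.
  assert (exists beta : X -> R, forall x, isB d r1 x (beta x)) as [beta Hbeta].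
  { exists (fun x => proj1_sig (constructive_indefinite_description _ (B_exists d r1 x Hd Hr1))).
    intro x. exact (proj2_sig (constructive_indefinite_description _ (B_exists d r1 x Hd Hr1))). }
  assert (exists beta : X -> R, forall x, isB d' r1 x (beta x)) as [beta' Hbeta'].
  { exists (fun x => proj1_sig (constructive_indefinite_description _ (B_exists d' r1 x Hd' Hr1'))).
    intro x. exact (proj2_sig (constructive_indefinite_description _ (B_exists d' r1 x Hd' Hr1'))). }
  assert (Heq: forall x, beta x = beta' x).
  { intro x. apply Rle_antisym.
    - apply (B_le d' d r1 x); auto.
    - apply (B_le d d' r1 x); auto. }
  pose proof Hd as [P [Z [Sy Tr]]]. pose proof Hd' as [P' [Z' [Sy' Tr']]].
  assert (Hlow: forall x y, Rabs (beta x - beta y) <= d' x y).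
  { intros x y. rewrite !Heq. pose proof (B_lip d' r1 x y _ _ Hd' (Hbeta' x) (Hbeta' y)).
    pose proof (B_lip d' r1 y x _ _ Hd' (Hbeta' y) (Hbeta' x)). rewrite Sy' in H0. apply Rabs_le; lra. }
  assert (Hlipd: forall x y, Rabs (beta x - beta y) <= d x y).
  { intros x y. pose proof (B_lip d r1 x y _ _ Hd (Hbeta x) (Hbeta y)).
    pose proof (B_lip d r1 y x _ _ Hd (Hbeta y) (Hbeta x)). rewrite Sy in H0. apply Rabs_le; lra. }
  destruct (Hr2b 0 ltac:(lra)) as [s0 Hs0]. destruct (Hr2b 1 ltac:(lra)) as [s1 Hs1].
  set (eps := s1 - s0).
  assert (Heps: Rabs eps = 1).
  { unfold eps. rewrite <- Hb, <- Hs1, <- Hs0, Hr2 by lra. rabs; lra. }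
  assert (Hsig: forall s, 0 <= s -> r2 s = b (s0 + eps * s)).
  { intros s Hs. destruct (Hr2b s Hs) as [t Ht]. rewrite Ht. f_equal.
    unfold eps. apply aff_lemma; auto.
    - rewrite <- Hb, <- Ht, <- Hs0, Hr2 by lra. rabs; lra.
    - rewrite <- Hb, <- Ht, <- Hs1, Hr2 by lra. reflexivity. }
  set (F := fun u => beta (b (s0 + eps * u))).
  assert (HF: forall u, F u + u = F 0).
  { apply (CB F (2 * C + d (r1 0) (r2 0))).
    - intros u v lam Hl. unfold F.
      replace (s0 + eps * (u + lam * (v - u))) with
        ((s0 + eps * u) + lam * ((s0 + eps * v) - (s0 + eps * u))) by ring.
      apply (B_conv d r1 b (s0 + eps * u) (s0 + eps * v)); auto.
    - intros u v. unfold F. eapply Rle_trans. apply Hlipd. rewrite Hb.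
      replace (s0 + eps * u - (s0 + eps * v)) with (eps * (u - v)) by ring.
      rewrite Rabs_mult, Heps. lra.
    - intros u Hu. unfold F. rewrite <- Hsig by auto.
      pose proof (B_bound d r1 r2 C u _ Hd Hr1 Hr2 HC2 Hu (Hbeta (r2 u))). lra. }
  assert (He2: eps * eps = 1) by (rabs; nra).
  assert (Hlin: forall x, beta (b x) = F 0 - eps * (x - s0)).
  { intro x. pose proof (HF (eps * (x - s0))). unfold F in H at 1.
    replace (s0 + eps * (eps * (x - s0))) with x in H. lra.
    replace (eps * (eps * (x - s0))) with ((eps * eps) * (x - s0)) by ring. rewrite He2. ring. }
  assert (Hge: forall x y, Rabs (x - y) <= d' (b x) (b y)).
  { intros x y. eapply Rle_trans; [|apply Hlow]. rewrite !Hlin.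
    replace (F 0 - eps * (x - s0) - (F 0 - eps * (y - s0))) with (- eps * (x - y)) by ring.
    rewrite Rabs_mult, Rabs_Ropp, Heps. lra. }
  destruct Hg as [g [Hg [Himg1 _]]].
  assert (Hwin: forall x w, x <= w <= x + 1 -> d' (b x) (b w) = w - x).
  { intros x w Hxw. destruct (Himg1 x) as [p Hp]. destruct (Himg1 (x+1)) as [q Hq].
    destruct (Himg1 w) as [m Hm].
    assert (Hpq: d' (b x) (b (x+1)) = Rabs (p - q)) by (rewrite Hp, Hq; apply Hg).
    assert (Hpm: d' (b x) (b w) = Rabs (p - m)) by (rewrite Hp, Hm; apply Hg).
    assert (Hmq: d' (b w) (b (x+1)) = Rabs (m - q)) by (rewrite Hm, Hq; apply Hg).
    pose proof (Hge x (x+1)). pose proof (Hge x w). pose proof (Hge w (x+1)).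
    assert (d' (b x) (b (x+1)) <= 1) by (apply Hunit; rewrite Hb; rabs; lra).
    assert (d' (b x) (b w) <= 1) by (apply Hunit; rewrite Hb; rabs; lra).
    assert (d' (b w) (b (x+1)) <= 1) by (apply Hunit; rewrite Hb; rabs; lra).
    rewrite Hpm. apply (win_lemma x w p q m); auto; rewrite <- ?Hpq, <- ?Hpm, <- ?Hmq; split; try lra;
    rabs; lra. }
  assert (Hup: forall n : nat, forall x y, x <= y <= x + INR n -> d' (b x) (b y) <= y - x).
  { induction n as [|n IH]; intros x y Hxy.
    - simpl in Hxy. rewrite Hwin; lra.
    - rewrite S_INR in Hxy. destruct (Rle_dec y (x + 1)).
      + rewrite Hwin; lra.
      + pose proof (Tr' (b x) (b (x+1)) (b y)). rewrite (Hwin x (x+1)) in H by lra.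
        specialize (IH (x+1) y ltac:(lra)). lra. }
  intros s t. rewrite Hb.
  destruct (Rle_dec s t).
  - destruct (nat_above (t - s)) as [k Hn]. pose proof (Hup k s t ltac:(lra)).
    pose proof (Hge s t). rabs; lra.
  - destruct (nat_above (s - t)) as [k Hn]. pose proof (Hup k t s ltac:(lra)).
    pose proof (Hge s t). rewrite Sy' in H. rabs; lra.
Qed.
End S.


Theorem lemma3 (X : Type) (d d' : X -> X -> R)
  (Hd : is_metric d) (Hdlc : locally_compact d) (Hdgc : geodesically_complete d)
  (Hdcat : CAT0 d) (Hdconn : connected_at_infinity d)
  (Hd' : is_metric d') (Hd'lc : locally_compact d') (Hd'gc : geodesically_complete d')
  (Hd'cat : CAT0 d')
  (Hunit : forall x y, d x y <= 1 <-> d' x y <= 1)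
  (a b : R -> X) (n : nat) (f : nat -> R -> X)
  (Ha : f 0%nat = a) (Hb : f n = b)
  (Hchain : asymptotic_chain d f n)
  (Himg : forall i, (i <= n)%nat ->
     exists g, complete_geodesic d' g /\ same_image (f i) g)
  (Hiso : forall t1 t2, d (a t1) (a t2) = d' (a t1) (a t2)) :
  forall t1 t2, d (b t1) (b t2) = d' (b t1) (b t2).
Proof.
  destruct Hchain as [Hcg Has].
  assert (H: forall i, (i <= n)%nat -> forall s t, d (f i s) (f i t) = d' (f i s) (f i t)).
  { induction i as [|i IH]; intros Hi s t.
    - rewrite Ha. apply Hiso.
    - specialize (Has (S i) ltac:(lia)). replace (S i - 1)%nat with i in Has by lia.
      apply (step d d' Hd Hd' Hdcat (proj1 Hd'cat) Hunit (f i) (f (S i))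
        (Hcg i ltac:(lia)) (Hcg (S i) ltac:(lia)) (IH ltac:(lia)) Has (Himg (S i) Hi)). }
  intros t1 t2. rewrite <- Hb. apply H; lia.
Qed.
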